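(* Let $\mathcal{D}=(V,\Phi)$ be a finite directed graph (arcs $\Phi\subseteq V\times V$) with adjacency matrix $M\in\{0,1\}^{V\times V}$ ($M_{vw}=1$ iff $(v,w)\in\Phi$). Let $\boldsymbol{\alpha}(t),\boldsymbol{\beta}(t)\in[0,+\infty)^V$ ($t\ge0$) be vector sequences such that $\boldsymbol{\alpha}(t)$ is non-decreasing in every component and $\boldsymbol{\beta}(t)$ is convergent, and let $\mathbf{r},\mathbf{s}\in(0,+\infty)^V$ with $r_v=s_v^{-1}$ for all $v\in V$. Set $W_{vw}=r_vM_{vw}s_w$. Define $\boldsymbol{\omega}(t),\boldsymbol{\eta}(t)\in\mathbb{R}^V$ by $\boldsymbol{\omega}(0)=\boldsymbol{\eta}(0)=\mathbf{1}$ and, for all $v\in V$, $t\ge0$, $$\omega_v(t+1)=\frac{1}{1+\alpha_v(t)+\sum_{w}W_{vw}(1-\omega_w(t))},\qquad \eta_v(t+1)=1+\beta_v(t)+\sum_w M_{vw}\,\omega_w(t)\,\eta_w(t).$$ If $\mathcal{D}$ is acyclic, then $\boldsymbol{\eta}(t)$ is convergent and $\boldsymbol{\omega}(t)$ is non-increasing in every component and convergent. Moreover, for each $v\in V$, $\lim_{t\to\infty}\omega_v(t)<1$ if and only if there exists $w$ reachable from $v$ such that the sequence $\alpha_w(t)$ is not identically zero.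
   Context: A path from $v$ to $w$ of length $l\ge0$ is a list $(u_0,\dots,u_l)$ with $u_0=v$, $u_l=w$ and $(u_{i-1},u_i)\in\Phi$; $w$ is reachable from $v$ if such a path of some length $l\ge0$ exists (so $v$ is reachable from itself). A strongly connected component is a maximal induced subdigraph in which every node is reachable from every other; it is trivial if it is a single node without a self-loop. $\mathcal{D}$ is acyclic if all its strongly connected components are trivial. *)

(* Defs.v *)
From HB Require Import structures.
From mathcomp Require Import all_boot all_order all_algebra.
From mathcomp Require Import all_classical all_reals all_analysis.
Set Implicit Arguments. Unset Strict Implicit. Unset Printing Implicit Defensive.
Import Order.TTheory GRing.Theory Num.Theory.
Local Open Scope ring_scope.

Section Digraph.
Variable V : finType.
Variable Phi : rel V.

Definition reachable (v w : V) : bool := connect Phi v w.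

Definition induced_rel (S : {set V}) : rel V :=
  fun a b => [&& a \in S, b \in S & Phi a b].

Definition strongly_connected_set (S : {set V}) : Prop :=
  S != finset.set0 /\ forall x y, x \in S -> y \in S -> connect (induced_rel S) x y.

Definition is_scc (S : {set V}) : Prop :=
  strongly_connected_set S /\
  forall T : {set V}, strongly_connected_set T -> S \subset T -> T = S.

Definition trivial_scc (S : {set V}) : Prop :=
  exists v, S = finset.set1 v /\ ~~ Phi v v.

Definition acyclic : Prop := forall S, is_scc S -> trivial_scc S.

Variable R : realType.

Definition adj (v w : V) : R := if Phi v w then 1 else 0.

Variables (alpha beta : nat -> V -> R) (r s : V -> R).

Definition Wmat (v w : V) : R := r v * adj v w * s w.

Fixpoint omegaseq (t : nat) : V -> R :=
  match t with
  | 0%N => fun _ => 1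
  | t'.+1 => fun v =>
      (1 + alpha t' v + \sum_(w : V) Wmat v w * (1 - omegaseq t' w))^-1
  end.

Fixpoint etaseq (t : nat) : V -> R :=
  match t with
  | 0%N => fun _ => 1
  | t'.+1 => fun v =>
      1 + beta t' v + \sum_(w : V) adj v w * omegaseq t' w * etaseq t' w
  end.

End Digraph.

(* Main.v *)
Require Import Defs.
From HB Require Import structures.
From mathcomp Require Import all_boot all_order all_algebra.
From mathcomp Require Import all_classical all_reals all_analysis.
Import Order.TTheory GRing.Theory Num.Theory.
Import numFieldNormedType.Exports.
Local Open Scope classical_set_scope.
Local Open Scope ring_scope.

Lemma acyc_edge (V : finType) (Phi : rel V) (v w : V) :
  acyclic Phi -> Phi v w -> ~~ connect Phi w v.
Proof.
move=> ac vw; apply/negP => wv.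
pose S := [set x | connect Phi v x && connect Phi x v]%SET.
have key : forall p x, path Phi x p -> connect Phi v x ->
    connect Phi (last x p) v -> connect (induced_rel Phi S) x (last x p).
  elim=> [|y p IH] x /=; first by move=> *; exact: connect0.
  move=> /andP[xy py] vx lv.
  have vy : connect Phi v y by apply: connect_trans vx (connect1 xy).
  have yl : connect Phi y (last y p) by apply/connectP; exists p.
  have yv : connect Phi y v by apply: connect_trans yl lv.
  apply: connect_trans (IH y py vy lv).
  apply: connect1; rewrite /induced_rel !inE xy vx vy yv /= andbT.
  exact: connect_trans (connect1 xy) yv.
have sc : strongly_connected_set Phi S.
  split.
    by apply/set0Pn; exists v; rewrite inE connect0.
  move=> x y; rewrite !inE => /andP[vx xv] /andP[vy yv].
  have h1 : connect (induced_rel Phi S) x v.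
    move/connectP: xv => [p px lv]; rewrite lv; apply: key => //; by rewrite -lv connect0.
  have h2 : connect (induced_rel Phi S) v y.
    move/connectP: vy => [p pv ly]; rewrite ly; apply: key => //; by rewrite -ly.
  exact: connect_trans h1 h2.
have scc : is_scc Phi S.
  split => // T [_ Tc] ST; apply/setP => y; apply/idP/idP; last by move/(fintype.subsetP ST).
  move=> yT; have vT : v \in T by apply: (fintype.subsetP ST); rewrite inE connect0.
  have sub : forall a b, connect (induced_rel Phi T) a b -> connect Phi a b.
    move=> a b; apply: connect_sub => c d /andP[_ /andP[_ cd]]; exact: connect1.
  by rewrite inE (sub _ _ (Tc _ _ vT yT)) (sub _ _ (Tc _ _ yT vT)).
have [u [Su nu]] := ac S scc.
have vS : v \in S by rewrite inE connect0.
have wS : w \in S by rewrite inE connect1 // wv.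
move: vS wS; rewrite Su !inE => /eqP Hv /eqP Hw.
by move: vw; rewrite Hv Hw (negbTE nu).
Qed.

Lemma rank_lt (V : finType) (Phi : rel V) (v w : V) :
  acyclic Phi -> Phi v w ->
  (#|[set x | connect Phi w x]%SET| < #|[set x | connect Phi v x]%SET|)%N.
Proof.
move=> ac vw; apply: proper_card; apply/fintype.properP; split.
  apply/fintype.subsetP => x; rewrite !inE => wx.
  exact: connect_trans (connect1 vw) wx.
by exists v; rewrite !inE ?connect0 //; exact: (@acyc_edge _ _ _ _ ac vw).
Qed.

Lemma W_ge0 (V : finType) (Phi : rel V) (R : realType) (r s : V -> R)
  (r_gt0 : forall v, 0 < r v) (s_gt0 : forall v, 0 < s v) v w :
  0 <= Wmat Phi r s v w.
Proof.
rewrite /Wmat /adj; case: (Phi v w); rewrite ?mulr1 ?mulr0 ?mul0r //.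
by apply: mulr_ge0; apply: ltW.
Qed.

Lemma om_bounds (V : finType) (Phi : rel V) (R : realType)
  (alpha : nat -> V -> R) (r s : V -> R)
  (alpha_ge0 : forall t v, 0 <= alpha t v)
  (r_gt0 : forall v, 0 < r v) (s_gt0 : forall v, 0 < s v) t v :
  0 < omegaseq Phi alpha r s t v <= 1.
Proof.
elim: t v => [|t IH] v /=; first by rewrite ltr01 lexx.
set D := (X in X^-1).
have D1 : 1 <= D.
  rewrite /D -addrA lerDl; apply: addr_ge0 => //; apply: sumr_ge0 => w _.
  apply: mulr_ge0; first exact: W_ge0.
  by rewrite subr_ge0; case/andP: (IH w).
have D0 : 0 < D by apply: lt_le_trans D1.
by rewrite invr_gt0 D0 invf_le1.
Qed.

Lemma om_noninc (V : finType) (Phi : rel V) (R : realType)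
  (alpha : nat -> V -> R) (r s : V -> R)
  (alpha_ge0 : forall t v, 0 <= alpha t v)
  (alpha_nd : forall v, nondecreasing_seq (fun t => alpha t v))
  (r_gt0 : forall v, 0 < r v) (s_gt0 : forall v, 0 < s v) t v :
  omegaseq Phi alpha r s t.+1 v <= omegaseq Phi alpha r s t v.
Proof.
have B := @om_bounds V Phi R alpha r s alpha_ge0 r_gt0 s_gt0.
elim: t v => [|t IH] v; first by case/andP: (B 1%N v).
rewrite [omegaseq _ _ _ _ t.+2 v]/= [omegaseq _ _ _ _ t.+1 v]/=.
have Dpos : forall u, 0 < 1 + alpha u v + \sum_w Wmat Phi r s v w * (1 - omegaseq Phi alpha r s u w).
  move=> u; apply: (@lt_le_trans _ _ 1) => //; rewrite -addrA lerDl.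
  apply: addr_ge0 => //; apply: sumr_ge0 => w _.
  apply: mulr_ge0; first exact: W_ge0.
  by rewrite subr_ge0; case/andP: (B u w).
rewrite lef_pV2 ?posrE ?Dpos //.
apply: lerD; first by apply: lerD => //; apply: alpha_nd.
apply: ler_sum => w _; apply: ler_wpM2l; first exact: W_ge0.
by rewrite lerD2l lerN2; apply: IH.
Qed.
Lemma om_lt1_intro (V : finType) (Phi : rel V) (R : realType)
  (alpha : nat -> V -> R) (r s : V -> R)
  (alpha_ge0 : forall t v, 0 <= alpha t v)
  (r_gt0 : forall v, 0 < r v) (s_gt0 : forall v, 0 < s v) t v :
  (alpha t v != 0 \/ exists w, Phi v w /\ omegaseq Phi alpha r s t w < 1) ->
  omegaseq Phi alpha r s t.+1 v < 1.
Proof.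
have B := @om_bounds V Phi R alpha r s alpha_ge0 r_gt0 s_gt0.
move=> H /=.
have S0 : 0 <= \sum_w Wmat Phi r s v w * (1 - omegaseq Phi alpha r s t w).
  apply: sumr_ge0 => w _; apply: mulr_ge0; first exact: W_ge0.
  by rewrite subr_ge0; case/andP: (B t w).
have D1 : 1 < 1 + alpha t v + \sum_w Wmat Phi r s v w * (1 - omegaseq Phi alpha r s t w).
  case: H => [a0|[w [vw lw]]].
    rewrite -addrA ltrDl; apply: (@lt_le_trans _ _ (alpha t v)); last by rewrite lerDl.
    by rewrite lt_def a0 alpha_ge0.
  rewrite -addrA ltrDl; apply: (@lt_le_trans _ _ (\sum_w Wmat Phi r s v w * (1 - omegaseq Phi alpha r s t w))); last by rewrite lerDr.
  rewrite (bigD1 w) //=; apply: (@lt_le_trans _ _ (Wmat Phi r s v w * (1 - omegaseq Phi alpha r s t w))); last rewrite lerDl.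
    rewrite /Wmat /adj vw mulr1; apply: mulr_gt0; first exact: mulr_gt0.
    by rewrite subr_gt0.
  apply: sumr_ge0 => u _; apply: mulr_ge0; first exact: W_ge0.
  by rewrite subr_ge0; case/andP: (B t u).
by rewrite invf_lt1 ?D1 //; apply: lt_trans D1.
Qed.

Lemma om_lt1_elim (V : finType) (Phi : rel V) (R : realType)
  (alpha : nat -> V -> R) (r s : V -> R)
  (alpha_ge0 : forall t v, 0 <= alpha t v)
  (r_gt0 : forall v, 0 < r v) (s_gt0 : forall v, 0 < s v) t v :
  omegaseq Phi alpha r s t.+1 v < 1 ->
  (alpha t v != 0 \/ exists w, Phi v w /\ omegaseq Phi alpha r s t w < 1).
Proof.
have B := @om_bounds V Phi R alpha r s alpha_ge0 r_gt0 s_gt0.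
move=> H.
case: (boolP (alpha t v != 0)) => a0; first by left.
case: (pselect (exists w, Phi v w /\ omegaseq Phi alpha r s t w < 1)) => [ex|nw]; first by right.
exfalso; move: H => /=.
have -> : \sum_w Wmat Phi r s v w * (1 - omegaseq Phi alpha r s t w) = 0.
  apply: big1 => w _; rewrite /Wmat /adj.
  case: (boolP (Phi v w)) => vw; last by rewrite mulr0 mul0r mul0r.
  have -> : omegaseq Phi alpha r s t w = 1.
    apply/eqP; rewrite eq_le; case/andP: (B t w) => _ -> /=.
    by rewrite leNgt; apply/negP => lt; apply: nw; exists w.
  by rewrite subrr mulr0.
by move/negPn/eqP: a0 => ->; rewrite addr0 addr0 invr1 ltxx.
Qed.
Lemma cvg_sum_seq (V : eqType) (R : realType) (s : seq V) (F : V -> nat -> R) :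
  (forall w, cvg (F w @ \oo)) ->
  cvg ((fun t => \sum_(w <- s) F w t) @ \oo).
Proof.
move=> HF; elim: s => [|a s IH].
  have -> : (fun t => \sum_(w <- [::]) F w t) = (fun=> 0) by apply/funext => t; rewrite big_nil.
  exact: is_cvg_cst.
have -> : (fun t => \sum_(w <- a :: s) F w t) = F a + (fun t => \sum_(w <- s) F w t).
  by apply/funext => t; rewrite big_cons.
exact: is_cvgD.
Qed.

Theorem lemma3 (V : finType) (Phi : rel V) (R : realType)
  (alpha beta : nat -> V -> R) (r s : V -> R)
  (alpha_ge0 : forall t v, 0 <= alpha t v)
  (beta_ge0 : forall t v, 0 <= beta t v)
  (alpha_nd : forall v, nondecreasing_seq (fun t => alpha t v))
  (beta_cvg : forall v, cvg ((fun t => beta t v) @ \oo))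
  (r_gt0 : forall v, 0 < r v) (s_gt0 : forall v, 0 < s v)
  (rs : forall v, r v = (s v)^-1) :
  acyclic Phi ->
  (forall v, cvg ((fun t => etaseq Phi alpha beta r s t v) @ \oo)) /\
  (forall v, nonincreasing_seq (fun t => omegaseq Phi alpha r s t v)) /\
  (forall v, cvg ((fun t => omegaseq Phi alpha r s t v) @ \oo)) /\
  (forall v, lim ((fun t => omegaseq Phi alpha r s t v) @ \oo) < 1 <->
             exists w, reachable Phi v w /\ exists t, alpha t w != 0).
Proof.
move=> ac.
have B := @om_bounds V Phi R alpha r s alpha_ge0 r_gt0 s_gt0.
have NI : forall v, nonincreasing_seq (fun t => omegaseq Phi alpha r s t v).
  move=> v; apply/nonincreasing_seqP => n.
  exact: (@om_noninc V Phi R alpha r s alpha_ge0 alpha_nd r_gt0 s_gt0).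
have CV : forall v, cvg ((fun t => omegaseq Phi alpha r s t v) @ \oo).
  move=> v; apply: nonincreasing_is_cvgn => //.
  by exists 0 => y [t _ <-]; case/andP: (B t v) => /ltW.
split; last split => //; last split => //.
  suff K : forall n v, (#|[set x | connect Phi v x]%SET| < n)%N ->
      cvg ((fun t => etaseq Phi alpha beta r s t v) @ \oo).
    by move=> v; apply: (K _ v (ltnSn _)).
  elim=> [|n IH] v // rv.
  suff H : cvg ((fun t => etaseq Phi alpha beta r s t.+1 v) @ \oo).
    apply: (cvgP (lim ((fun t => etaseq Phi alpha beta r s t.+1 v) @ \oo))).
    by rewrite -(cvg_shiftS (fun t => etaseq Phi alpha beta r s t v)).
  have -> : (fun t => etaseq Phi alpha beta r s t.+1 v) =
    ((fun=> 1) + (fun t => beta t v)) + (fun t => \sum_w adj Phi R v w * omegaseq Phi alpha r s t w *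
                                       etaseq Phi alpha beta r s t w) by [].
  apply: is_cvgD; first by apply: is_cvgD; [exact: is_cvg_cst | exact: beta_cvg].
  apply: (@cvg_sum_seq V R (index_enum V) (fun w t => adj Phi R v w * omegaseq Phi alpha r s t w *
                                       etaseq Phi alpha beta r s t w)) => w.
  case: (boolP (Phi v w)) => vw.
    have -> : (fun t => adj Phi R v w * omegaseq Phi alpha r s t w * etaseq Phi alpha beta r s t w)
        = (fun t => omegaseq Phi alpha r s t w) \* (fun t => etaseq Phi alpha beta r s t w).
      by apply/funext => t; rewrite /adj vw mul1r.
    apply: is_cvgM => //; apply: IH.
    by have := @rank_lt V Phi v w ac vw; rewrite ltnS in rv; move/leq_trans; apply.
  have -> : (fun t => adj Phi R v w * omegaseq Phi alpha r s t w * etaseq Phi alpha beta r s t w)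
      = (fun=> 0).
    by apply/funext => t; rewrite /adj (negbTE vw) !mul0r.
  exact: is_cvg_cst.
move=> v.
have LA : lim ((fun t => omegaseq Phi alpha r s t v) @ \oo) < 1 <->
          exists t, omegaseq Phi alpha r s t v < 1.
  split.
    case: (pselect (exists t, omegaseq Phi alpha r s t v < 1)) => // /forallNP H.
    have -> : (fun t => omegaseq Phi alpha r s t v) = (fun=> 1).
      apply/funext => t; apply/eqP; rewrite eq_le; case/andP: (B t v) => _ -> /=.
      by rewrite leNgt; apply/negP => lt; apply: (H t).
    by rewrite lim_cst ?ltxx //; exact: norm_hausdorff.
  case=> t lt; apply: le_lt_trans lt.
  exact: nonincreasing_cvgn_ge.
rewrite LA /reachable; clear LA; split.
  case=> t; elim: t v => [|t IH] v; first by rewrite ltxx.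
  case/(@om_lt1_elim V Phi R alpha r s alpha_ge0 r_gt0 s_gt0) => [a0|[w [vw lw]]].
    by exists v; split; [exact: connect0 | exists t].
  have [u [wu au]] := IH w lw.
  by exists u; split => //; exact: connect_trans (connect1 vw) wu.
case=> w [/connectP [p pv ->] [t0 a0]].
elim: p v pv a0 => [|y p IH] x /=.
  by move=> _ a0; exists t0.+1; apply: om_lt1_intro => //; left.
move=> /andP[xy py] a0; have [t lt] := IH y py a0.
by exists t.+1; apply: om_lt1_intro => //; right; exists y.
Qed.
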